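(* Let $G$ be a directed acyclic graph with $n$ vertices, including special vertices $s$ and $t$, in which each edge $e$ carries a weight function $w_e(x)=a_e x+b_e$ ($a_e,b_e\in\mathbb{R}$). For an $s$-$t$ path $P=(e_1,\dots,e_r)$ let $\mathsf{cost}(P)(x)=w_{e_r}(w_{e_{r-1}}(\cdots w_{e_1}(x)\cdots))$, and let $\mathcal{P}$ be the set of $s$-$t$ paths in $G$. Then $\mathsf{cost}_G(x)=\min_{P\in\mathcal{P}}\mathsf{cost}(P)(x)$ is a piecewise linear function of $x\in\mathbb{R}$ whose number of pieces $p(\mathsf{cost}_G)$ satisfies $p(\mathsf{cost}_G)\le n^{\log n+O(1)}$.
   Context: For a piecewise linear function $f:\mathbb{R}\to\mathbb{R}$, $p(f)$ denotes its number of (maximal linear) pieces. Logarithms are base 2. *)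

(* Defs.v *)
From HB Require Import structures.
From mathcomp Require Import all_boot all_order all_algebra.
From mathcomp Require Import reals exp.
Set Implicit Arguments. Unset Strict Implicit. Unset Printing Implicit Defensive.
Import Order.TTheory GRing.Theory Num.Theory.
Local Open Scope ring_scope.

Section Defs.
Variable R : realType.

(* A directed graph on vertex set 'I_n is an edge relation E (simple: at most
   one edge per ordered pair).  It is acyclic if no nonempty directed walk
   returns to its starting vertex. *)
Definition acyclic (n : nat) (E : rel 'I_n) : Prop :=
  forall (v : 'I_n) (p : seq 'I_n), path E v p -> p != [::] -> last v p != v.

Definition st_path (n : nat) (E : rel 'I_n) (s t : 'I_n) (p : seq 'I_n) : Prop :=
  path E s p /\ last s p = t.

Fixpoint path_cost (n : nat) (a b : 'I_n -> 'I_n -> R) (u : 'I_n)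
    (p : seq 'I_n) (x : R) : R :=
  match p with
  | [::] => x
  | v :: p' => path_cost a b v p' (a u v * x + b u v)
  end.

Definition is_min_cost (n : nat) (E : rel 'I_n) (a b : 'I_n -> 'I_n -> R)
    (s t : 'I_n) (f : R -> R) : Prop :=
  forall x : R,
    (exists p, st_path E s t p /\ f x = path_cost a b s p x) /\
    (forall p, st_path E s t p -> f x <= path_cost a b s p x).

(* f is piecewise linear with at most k (maximal linear) pieces:
   there are breakpoints xs_0 < ... < xs_(m-1), m + 1 <= k, such that f is
   affine on each of the closed intervals (-oo, xs_0], [xs_0, xs_1], ...,
   [xs_(m-1), +oo). *)
Definition pieces_le (f : R -> R) (k : nat) : Prop :=
  exists xs : seq R,
    sorted <%R xs /\ (size xs < k)%N /\
    forall i : nat, (i <= size xs)%N ->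
      exists alpha beta : R, forall x : R,
        ((0 < i)%N -> nth 0 xs i.-1 <= x) ->
        ((i < size xs)%N -> x <= nth 0 xs i) ->
        f x = alpha * x + beta.

Definition log2 (y : R) : R := ln y / ln 2.

End Defs.

(* Main.v *)
Require Import Defs.
From HB Require Import structures.
From mathcomp Require Import all_boot all_order all_algebra.
From mathcomp Require Import reals exp boolp.
From mathcomp Require Import ring lra zify.
Import Order.TTheory GRing.Theory Num.Theory.
Local Open Scope ring_scope.
Set Implicit Arguments. Unset Strict Implicit. Unset Printing Implicit Defensive.


Section Lines.
Variable R : realType.
Definition line := (R * R)%type.
Definition ev (l : line) (x : R) : R := l.1 * x + l.2.

Fixpoint am (d : line) (S : seq line) (x : R) : line :=
  match S with
  | [::] => d
  | l :: S' => let r := am l S' x in if ev d x <= ev r x then d else r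
  end.

Lemma am_in d S x : am d S x \in d :: S.
Proof.
elim: S d => [|l S IH] d /=; first by rewrite mem_seq1.
case: ifP => _; first by rewrite mem_head.
by rewrite in_cons (IH l) orbT.
Qed.

Lemma am_min d S x l : l \in d :: S -> ev (am d S x) x <= ev l x.
Proof.
elim: S d l => [|l' S IH] d l /=; first by rewrite mem_seq1 => /eqP->.
rewrite in_cons => /orP[/eqP->|Hl].
  case: ifP => // /negbT; rewrite -ltNge => /ltW //.
case: ifP => H; last exact: IH.
exact: le_trans H (IH _ _ Hl).
Qed.

Lemma minimizer_mono (S : seq line) x1 x2 h1 h2 : x1 < x2 ->
  (forall l, l \in S -> ev h1 x1 <= ev l x1) ->
  (forall l, l \in S -> ev h2 x2 <= ev l x2) -> h1 \in S -> h2 \in S ->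
  h2.1 < h1.1 \/ h1 = h2.
Proof.
move=> lt12 m1 m2 i1 i2.
have A := m1 _ i2; have B := m2 _ i1.
move: A B; rewrite /ev; case: h1 {m1 i1} => p1 q1; case: h2 {m2 i2} => p2 q2 /= A B.
case: (ltgtP p1 p2) => [lt|gt|eq]; [|by left|].
- exfalso; nra.
- right; subst p2; congr pair; lra.
Qed.

Definition rkgt (S : seq line) (s : R) := count (fun l : line => s < l.1) S.
Definition rklt (S : seq line) (s : R) := count (fun l : line => l.1 < s) S.

Lemma count_strict (T : eqType) (a b : pred T) (s : seq T) :
  (forall x, a x -> b x) -> (exists2 y, y \in s & b y && ~~ a y) ->
  (count a s < count b s)%N.
Proof.
move=> ab [y]; elim: s => // z s IH; rewrite in_cons => /orP[/eqP<-|ys] H /=.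
  move/andP: H => [-> /negbTE ->]; rewrite add0n add1n ltnS.
  by apply: sub_count.
have Hz : (a z <= b z)%N by case: (a z) (ab z) => // ->.
by rewrite -addnS leq_add // IH.
Qed.

Lemma rkgt_le S s1 s2 : s2 <= s1 -> (rkgt S s1 <= rkgt S s2)%N.
Proof. by move=> H; apply: sub_count => l /=; apply: le_lt_trans. Qed.
Lemma rkgt_lt S s1 s2 l : s2 < s1 -> l \in S -> l.1 = s1 -> (rkgt S s1 < rkgt S s2)%N.
Proof.
move=> H lS e; apply: count_strict => [x /=|]; first exact: lt_trans.
by exists l => //=; rewrite e H ltxx.
Qed.
Lemma rklt_le S s1 s2 : s1 <= s2 -> (rklt S s1 <= rklt S s2)%N.
Proof. by move=> H; apply: sub_count => l /= ?; apply: lt_le_trans H. Qed.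
Lemma rklt_lt S s1 s2 l : s1 < s2 -> l \in S -> l.1 = s1 -> (rklt S s1 < rklt S s2)%N.
Proof.
move=> H lS e; apply: count_strict => [x /= ?|]; first exact: lt_trans H.
by exists l => //=; rewrite e H ltxx.
Qed.
Lemma rkgt_size S l : l \in S -> (rkgt S l.1 < size S)%N.
Proof.
move=> lS; rewrite -(count_predT S); apply: count_strict => //.
by exists l => //=; rewrite ltxx.
Qed.
Lemma rklt_size S l : l \in S -> (rklt S l.1 < size S)%N.
Proof.
move=> lS; rewrite -(count_predT S); apply: count_strict => //.
by exists l => //=; rewrite ltxx.
Qed.

End Lines.



Section Core.
Variable R : realType.
Local Notation line := (line R).

Lemma size_bound (T : eqType) (sel : R -> T) (P : R -> Prop) (phi : T -> nat) N (s : seq T) :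
 uniq s -> (forall p, p \in s -> exists x, P x /\ sel x = p) ->
 (forall x, P x -> phi (sel x) < N)%N ->
 (forall x1 x2, x1 < x2 -> P x1 -> P x2 -> sel x1 = sel x2 \/ (phi (sel x1) < phi (sel x2))%N) ->
 (size s <= N)%N.
Proof.
move=> us Hs HN step.
have inj : {in s &, injective phi}.
  move=> p1 p2 /Hs[x1 [P1 <-]] /Hs[x2 [P2 <-]] e.
  case: (ltgtP x1 x2) => [lt|gt|->//].
    by case: (step _ _ lt P1 P2) => // /ltn_eqF; rewrite e eqxx.
  by case: (step _ _ gt P2 P1) => // /ltn_eqF; rewrite e eqxx.
rewrite -(size_map phi) -(size_iota 0 N); apply: uniq_leq_size.
  by rewrite map_inj_in_uniq.
move=> k /mapP [p /Hs [x [Px <-]] ->]; rewrite mem_iota /= add0n; exact: HN.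
Qed.

Definition comp (p : line * line) : line := (p.1.1 * p.2.1, p.1.1 * p.2.2 + p.1.2).
Lemma ev_comp p x : ev (comp p) x = ev p.1 (ev p.2 x).
Proof. rewrite /ev /=; ring. Qed.

Lemma core (G H : seq line) : exists T : seq line,
  (forall t, t \in T -> exists g h, [/\ g \in G, h \in H & forall x, ev t x = ev g (ev h x)]) /\
  (size T <= 2 * (size G + size H))%N /\
  (forall x y, (exists2 h, h \in H & ev h x = y) -> (forall h, h \in H -> y <= ev h x) ->
     forall g0, g0 \in G -> exists2 t, t \in T & forall g, g \in G -> ev t x <= ev g y).
Proof.
case: G => [|g1 G']; first by exists [::]; split => //; split => //.
case: H => [|h1 H']; first by exists [::]; split => //; split => // x y [].
set G := g1 :: G'; set H := h1 :: H'.
pose selH x := am h1 H' x.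
pose Lh x := ev (selH x) x.
pose selG y := am g1 G' y.
pose sel x := (selG (Lh x), selH x).
have selH_in x : selH x \in H by exact: am_in.
have selG_in y : selG y \in G by exact: am_in.
have selH_min x : forall l, l \in H -> ev (selH x) x <= ev l x by move=> l; exact: am_min.
have selG_min y : forall l, l \in G -> ev (selG y) y <= ev l y by move=> l; exact: am_min.
have mH x1 x2 : x1 < x2 -> (selH x2).1 < (selH x1).1 \/ selH x1 = selH x2.
  move=> lt; exact: minimizer_mono lt (selH_min x1) (selH_min x2) (selH_in x1) (selH_in x2).
have mG y1 y2 : y1 <= y2 -> (selG y2).1 < (selG y1).1 \/ selG y1 = selG y2.
  rewrite le_eqVlt => /orP[/eqP->|lt]; first by right.
  exact: minimizer_mono lt (selG_min y1) (selG_min y2) (selG_in y1) (selG_in y2).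
pose phiA (p : line * line) := (rkgt H p.2.1 + rkgt G p.1.1)%N.
pose phiB (p : line * line) := (rkgt H p.2.1 + rklt G p.1.1)%N.
pose PA := undup [seq p <- allpairs pair G H | `[< exists x, 0 <= (selH x).1 /\ sel x = p >]].
pose PB := undup [seq p <- allpairs pair G H | `[< exists x, (selH x).1 <= 0 /\ sel x = p >]].
have sPA : (size PA <= size G + size H)%N.
  apply: (@size_bound _ sel (fun x => 0 <= (selH x).1) phiA); first exact: undup_uniq.
  - by move=> p; rewrite mem_undup mem_filter => /andP[/asboolP].
  - move=> x _; have A := rkgt_size (selH_in x); have B := rkgt_size (selG_in (Lh x)).
    rewrite /phiA addnC; apply: leq_trans (leq_add B A).
    by rewrite addSn addnS ltnS leqnSn.
  move=> x1 x2 lt _ P2.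
  have ley : Lh x1 <= Lh x2.
    apply: le_trans (selH_min x1 _ (selH_in x2)) _; rewrite /Lh /ev; nra.
  rewrite /sel /phiA.
  case: (mH _ _ lt) => [h2|->]; case: (mG _ _ ley) => [g2|->]; try by left.
  + right; rewrite -addSn; apply: leq_add; first exact: (rkgt_lt h2 (selH_in x1) erefl).
    exact: ltnW (rkgt_lt g2 (selG_in _) erefl).
  + right; rewrite ltn_add2r; exact: rkgt_lt h2 (selH_in x1) erefl.
  + right; rewrite ltn_add2l; exact: rkgt_lt g2 (selG_in _) erefl.
have sPB : (size PB <= size G + size H)%N.
  apply: (@size_bound _ sel (fun x => (selH x).1 <= 0) phiB); first exact: undup_uniq.
  - by move=> p; rewrite mem_undup mem_filter => /andP[/asboolP].
  - move=> x _; have A := rkgt_size (selH_in x); have B := rklt_size (selG_in (Lh x)).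
    rewrite /phiB addnC; apply: leq_trans (leq_add B A).
    by rewrite addSn addnS ltnS leqnSn.
  move=> x1 x2 lt P1 _.
  have ley : Lh x2 <= Lh x1.
    apply: le_trans (selH_min x2 _ (selH_in x1)) _; rewrite /Lh /ev; nra.
  rewrite /sel /phiB /=.
  case: (mH _ _ lt) => [h2|->]; case: (mG _ _ ley) => [g2|->]; try by left.
  + right; rewrite -addSn; apply: leq_add; first exact: (rkgt_lt h2 (selH_in x1) erefl).
    exact: ltnW (rklt_lt g2 (selG_in _) erefl).
  + right; rewrite ltn_add2r; exact: rkgt_lt h2 (selH_in x1) erefl.
  + right; rewrite ltn_add2l; exact: rklt_lt g2 (selG_in _) erefl.
exists (map comp (PA ++ PB)); split; [|split].
- move=> t /mapP [p Hp ->]; move: Hp; rewrite mem_cat !mem_undup !mem_filter => Hp.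
  have : p \in allpairs pair G H by case/orP: Hp => /andP[].
  case/allpairsP => [[g h] [gG hH ->]]; exists g, h; split => // x; exact: ev_comp.
- by rewrite size_map size_cat mul2n -addnn; apply: leq_add.
move=> x y [h hH hy] ymin g0 _.
have yE : y = Lh x by apply/le_anti; rewrite ymin // -hy selH_min.
have inall : sel x \in allpairs pair G H.
  by apply/allpairsP; exists (sel x); split; [exact: selG_in | exact: selH_in | ].
exists (comp (sel x)).
  apply/mapP; exists (sel x) => //; rewrite mem_cat !mem_undup !mem_filter inall !andbT.
  case: (lerP 0 (selH x).1) => [le|/ltW le]; apply/orP; [left|right];
    by apply/asboolP; exists x.
by move=> g gG; rewrite ev_comp /= yE; exact: selG_min.
Qed.

End Core.



Section Paths.
Variables (R : realType) (n : nat) (E : rel 'I_n) (a b : 'I_n -> 'I_n -> R).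
Local Notation line := (line R).
Local Notation cost := (path_cost a b).

Lemma cost_cat u p1 p2 x : cost u (p1 ++ p2) x = cost (last u p1) p2 (cost u p1 x).
Proof. by elim: p1 u x => //= v p1 IH u x; rewrite IH. Qed.

Definition OK j u v (l : line) := exists p, [/\ path E u p, last u p = v,
  (size p <= 2 ^ j)%N & forall x, ev l x = cost u p x].

Lemma comp_valid j u w v g h (t : line) : OK j w v g -> OK j u w h ->
  (forall x, ev t x = ev g (ev h x)) -> OK j.+1 u v t.
Proof.
move=> [p2 [P2 L2 S2 C2]] [p1 [P1 L1 S1 C1]] Ht; exists (p1 ++ p2); split.
- by rewrite cat_path P1 L1 P2.
- by rewrite last_cat L1.
- by rewrite size_cat expnS; lia.
- by move=> x; rewrite cost_cat Ht C1 C2 L1.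
Qed.

Definition lneg (l : line) : line := (- l.1, - l.2).
Definition lnegarg (l : line) : line := (- l.1, l.2).
Definition lnegb (l : line) : line := (l.1, - l.2).
Lemma ev_lneg l x : ev (lneg l) x = - ev l x.
Proof. rewrite /ev /=; ring. Qed.
Lemma ev_lnegarg l x : ev (lnegarg l) x = ev l (- x).
Proof. rewrite /ev /=; ring. Qed.
Lemma ev_lnegb l x : ev (lnegb l) x = - ev l (- x).
Proof. rewrite /ev /=; ring. Qed.

Lemma amS d (S : seq line) x : d \in S ->
  am d S x \in S /\ forall l, l \in S -> ev (am d S x) x <= ev l x.
Proof.
move=> dS; split; last by move=> l lS; apply: am_min; rewrite in_cons lS orbT.
by have := am_in d S x; rewrite in_cons => /orP[/eqP->|].
Qed.

Lemma aff_between (g : line) y c Y : y <= c -> c <= Y ->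
  (ev g y <= ev g c \/ ev g Y <= ev g c) /\ (ev g c <= ev g y \/ ev g c <= ev g Y).
Proof.
rewrite /ev => h1 h2; case: (lerP 0 g.1) => s; split; [left|right|right|left]; nra.
Qed.

Definition paths_prop j u v (Lo Hi : seq line) :=
  forall p, path E u p -> last u p = v -> (size p <= 2 ^ j)%N -> forall x,
    (exists2 l, l \in Lo & ev l x <= cost u p x) /\
    (exists2 l, l \in Hi & cost u p x <= ev l x).

Lemma combine j u w v (L1 H1 L2 H2 : seq line) N :
  (size L1 <= N)%N -> (size H1 <= N)%N -> (size L2 <= N)%N -> (size H2 <= N)%N ->
  (forall l, l \in L1 -> OK j u w l) -> (forall l, l \in H1 -> OK j u w l) ->
  (forall l, l \in L2 -> OK j w v l) -> (forall l, l \in H2 -> OK j w v l) ->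
  paths_prop j u w L1 H1 -> paths_prop j w v L2 H2 ->
  exists TLH : seq line * seq line,
  [/\ (size TLH.1 <= 8 * N)%N, (size TLH.2 <= 8 * N)%N,
   (forall l, l \in TLH.1 -> OK j.+1 u v l), (forall l, l \in TLH.2 -> OK j.+1 u v l) &
   forall p1 p2, path E u p1 -> last u p1 = w -> (size p1 <= 2 ^ j)%N ->
     path E w p2 -> last w p2 = v -> (size p2 <= 2 ^ j)%N -> forall x,
    (exists2 l, l \in TLH.1 & ev l x <= cost w p2 (cost u p1 x)) /\
    (exists2 l, l \in TLH.2 & cost w p2 (cost u p1 x) <= ev l x)].
Proof.
move=> sL1 sH1 sL2 sH2 oL1 oH1 oL2 oH2 P1 P2.
have [A1 [vA1 [sA1 pA1]]] := core L2 L1.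
have [A2 [vA2 [sA2 pA2]]] := core (map lnegarg L2) (map lneg H1).
have [B1 [vB1 [sB1 pB1]]] := core (map lneg H2) L1.
have [B2 [vB2 [sB2 pB2]]] := core (map lnegb H2) (map lneg H1).
exists (A1 ++ A2, map lneg (B1 ++ B2)); split => /=.
- rewrite size_cat; move: sA1 sA2; rewrite !size_map; lia.
- rewrite size_map size_cat; move: sB1 sB2; rewrite !size_map; lia.
- move=> t; rewrite mem_cat => /orP[/vA1|/vA2] [g [h [gG hH Ht]]].
    exact: comp_valid (oL2 _ gG) (oL1 _ hH) Ht.
  move: gG hH Ht => /mapP [g0 g0G ->] /mapP [h0 h0H ->] Ht.
  apply: comp_valid (oL2 _ g0G) (oH1 _ h0H) _ => x.
  by rewrite Ht ev_lnegarg ev_lneg opprK.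
- move=> t /mapP [t' + ->]; rewrite mem_cat => /orP[/vB1|/vB2] [g [h [gG hH Ht]]].
    move: gG Ht => /mapP [g0 g0G ->] Ht.
    apply: comp_valid (oH2 _ g0G) (oL1 _ hH) _ => x.
    by rewrite ev_lneg Ht ev_lneg opprK.
  move: gG hH Ht => /mapP [g0 g0G ->] /mapP [h0 h0H ->] Ht.
  apply: comp_valid (oH2 _ g0G) (oH1 _ h0H) _ => x.
  by rewrite ev_lneg Ht ev_lnegb ev_lneg !opprK.
move=> p1 p2 pp1 lp1 sp1 pp2 lp2 sp2 x.
have [[h hL1 hle] [k kH1 kle]] := P1 p1 pp1 lp1 sp1 x.
set c1 := cost u p1 x in hle kle *.
have [yin ymin] := amS x hL1.
set y := ev (am h L1 x) x.
have kn : lneg k \in map lneg H1 by apply: map_f.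
have [y'in y'min] := amS x kn.
set y' := ev (am (lneg k) (map lneg H1) x) x.
have ley : y <= c1 := le_trans (ymin h hL1) hle.
have leY : c1 <= - y'.
  have := y'min _ kn; rewrite ev_lneg -/y' => H0; lra.
have [[g gL2 gle] [g' gH2 gle']] := P2 p2 pp2 lp2 sp2 c1.
have ey : exists2 l, l \in L1 & ev l x = y by exists (am h L1 x).
have ey' : exists2 l, l \in map lneg H1 & ev l x = y' by exists (am (lneg k) (map lneg H1) x).
split.
- have [[c|c] _] := aff_between g ley leY.
  + have [t tA1 tle] := pA1 x y ey ymin g gL2.
    exists t; first by rewrite mem_cat tA1.
    exact: le_trans (tle g gL2) (le_trans c gle).
  + have [t tA2 tle] := pA2 x y' ey' y'min _ (map_f lnegarg gL2).
    exists t; first by rewrite mem_cat tA2 orbT.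
    have := tle _ (map_f lnegarg gL2); rewrite ev_lnegarg => c2.
    exact: le_trans c2 (le_trans c gle).
- have [_ [c|c]] := aff_between g' ley leY.
  + have [t tB1 tle] := pB1 x y ey ymin _ (map_f lneg gH2).
    exists (lneg t); first by apply: map_f; rewrite mem_cat tB1.
    have := tle _ (map_f lneg gH2); rewrite !ev_lneg => c2.
    apply: le_trans gle' (le_trans c _); lra.
  + have [t tB2 tle] := pB2 x y' ey' y'min _ (map_f lnegb gH2).
    exists (lneg t); first by apply: map_f; rewrite mem_cat tB2 orbT.
    have := tle _ (map_f lnegb gH2); rewrite ev_lneg ev_lnegb => c2.
    apply: le_trans gle' (le_trans c _); lra.
Qed.



Definition Qp j u v (Lo Hi : seq line) :=
  [/\ (size Lo <= 2 * (8 * n) ^ j)%N, (size Hi <= 2 * (8 * n) ^ j)%N,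
   (forall l, l \in Lo -> OK j u v l), (forall l, l \in Hi -> OK j u v l) &
   paths_prop j u v Lo Hi].

Lemma Q0 u v : exists Lo Hi, Qp 0 u v Lo Hi.
Proof.
pose base : seq line := (if u == v then [:: (1, 0)] else [::]) ++
  (if E u v then [:: (a u v, b u v)] else [::]).
have sb : (size base <= 2 * (8 * n) ^ 0)%N.
  by rewrite expn0 size_cat; case: (u == v); case: (E u v).
have ob : forall l, l \in base -> OK 0 u v l.
  move=> l; rewrite mem_cat => /orP[|].
    case: eqP => // <-; rewrite mem_seq1 => /eqP ->.
    by exists [::]; split => // x; rewrite /ev /= mul1r addr0.
  case Euv: (E u v) => //; rewrite mem_seq1 => /eqP ->.
  by exists [:: v]; split => //=; rewrite Euv.
have pb : paths_prop 0 u v base base.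
  move=> [|w [|w' p]] //= pp lp sp x.
    have lb : (1, 0) \in base by rewrite mem_cat lp eqxx mem_head.
    by split; exists (1, 0) => //; rewrite /ev mul1r addr0.
  move: pp; rewrite andbT lp => Euv.
  have lb : (a u v, b u v) \in base by rewrite mem_cat Euv mem_head orbT.
  by split; exists (a u v, b u v).
by exists base, base; split.
Qed.

Lemma size_flatten_le (T : Type) (s : seq 'I_n) (f : 'I_n -> seq T) K :
  (forall w, size (f w) <= K)%N -> (size (flatten (map f s)) <= size s * K)%N.
Proof.
move=> H; elim: s => //= w s IH; rewrite size_cat mulSn; exact: leq_add.
Qed.

Lemma Qstep j : (forall u v, exists Lo Hi, Qp j u v Lo Hi) ->
  forall u v, exists Lo Hi, Qp j.+1 u v Lo Hi.
Proof.
move=> IH.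
have IH' : forall uv : 'I_n * 'I_n, exists LH : seq line * seq line,
    Qp j uv.1 uv.2 LH.1 LH.2.
  by move=> [u v]; have [Lo [Hi H]] := IH u v; exists (Lo, Hi).
have [F HF] := choice IH'.
move=> u v.
have C : forall w : 'I_n, exists TLH : seq line * seq line,
  [/\ (size TLH.1 <= 8 * (2 * (8 * n) ^ j))%N, (size TLH.2 <= 8 * (2 * (8 * n) ^ j))%N,
   (forall l, l \in TLH.1 -> OK j.+1 u v l), (forall l, l \in TLH.2 -> OK j.+1 u v l) &
   forall p1 p2, path E u p1 -> last u p1 = w -> (size p1 <= 2 ^ j)%N ->
     path E w p2 -> last w p2 = v -> (size p2 <= 2 ^ j)%N -> forall x,
    (exists2 l, l \in TLH.1 & ev l x <= cost w p2 (cost u p1 x)) /\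
    (exists2 l, l \in TLH.2 & cost w p2 (cost u p1 x) <= ev l x)].
  move=> w.
  have [s1 s2 o1 o2 p1] := HF (u, w); have [s3 s4 o3 o4 p2] := HF (w, v).
  exact: combine s1 s2 s3 s4 o1 o2 o3 o4 p1 p2.
have [T HT] := choice C.
have sz : (n * (8 * (2 * (8 * n) ^ j)) <= 2 * (8 * n) ^ j.+1)%N.
  by rewrite expnS; nia.
exists (flatten (map (fun w => (T w).1) (enum 'I_n))),
       (flatten (map (fun w => (T w).2) (enum 'I_n))); split.
- apply: leq_trans sz.
  have := @size_flatten_le _ (enum 'I_n) (fun w => (T w).1) (8 * (2 * (8 * n) ^ j)).
  by rewrite size_enum_ord; apply => w; have [] := HT w.
- apply: leq_trans sz.
  have := @size_flatten_le _ (enum 'I_n) (fun w => (T w).2) (8 * (2 * (8 * n) ^ j)).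
  by rewrite size_enum_ord; apply => w; have [] := HT w.
- by move=> l /flatten_mapP [w _ lw]; have [_ _ o _ _] := HT w; apply: o.
- by move=> l /flatten_mapP [w _ lw]; have [_ _ _ o _] := HT w; apply: o.
move=> p pp lp sp x.
have s1 : (size (take (2 ^ j) p) <= 2 ^ j)%N by rewrite size_take_min geq_minl.
have s2 : (size (drop (2 ^ j) p) <= 2 ^ j)%N.
  by rewrite size_drop; move: sp; rewrite expnS; lia.
move: pp lp sp; rewrite -(cat_take_drop (2 ^ j) p) => pp lp sp.
move: pp; rewrite cat_path => /andP[pp1 pp2].
move: lp; rewrite last_cat => lp.
have [_ _ _ _ PP] := HT (last u (take (2 ^ j) p)).
have [[l1 i1 h1] [l2 i2 h2]] := PP _ _ pp1 erefl s1 pp2 lp s2 x.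
rewrite cost_cat; split.
- exists l1 => //; apply/flatten_mapP; exists (last u (take (2 ^ j) p)) => //.
  by rewrite mem_enum.
- exists l2 => //; apply/flatten_mapP; exists (last u (take (2 ^ j) p)) => //.
  by rewrite mem_enum.
Qed.

Lemma Qall j u v : exists Lo Hi, Qp j u v Lo Hi.
Proof. elim: j u v => [|j IH]; [exact: Q0 | exact: Qstep]. Qed.

Lemma dag_uniq : acyclic E -> forall u p, path E u p -> uniq (u :: p).
Proof.
move=> hac u p; elim: p u => [|x p IH] u //= /andP[Eux pp].
have := IH x pp => /= ->; rewrite andbT.
apply/negP => uin.
have P : path E u (x :: p) by rewrite /= Eux.
move: P; case/splitPr: uin => r1 r2; rewrite cat_path => /andP[P1 /= /andP[Eu _]].
have P' : path E u (rcons r1 u) by rewrite rcons_path P1.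
have ne : rcons r1 u != [::] by rewrite -size_eq0 size_rcons.
by move: (hac u (rcons r1 u) P' ne); rewrite last_rcons eqxx.
Qed.

Lemma dag_size : acyclic E -> forall u p, path E u p -> (size p < n)%N.
Proof.
move=> hac u p pp; have U := dag_uniq hac pp.
have := uniq_leq_size U (s2 := enum 'I_n) (fun z _ => mem_enum _ z).
by rewrite size_enum_ord.
Qed.

End Paths.



Section PW.
Variable R : realType.
Local Notation line := (line R).

Definition geo (lo : option R) (x : R) := if lo is Some l then l <= x else true.

Fixpoint PWf (f : R -> R) (lo : option R) (xs : seq R) : Prop :=
  match xs with
  | [::] => exists al be, forall x, geo lo x -> f x = al * x + be
  | x1 :: xs' => (if lo is Some l then l < x1 else True) /\
     (exists al be, forall x, geo lo x -> x <= x1 -> f x = al * x + be) /\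
     PWf f (Some x1) xs'
  end.

Lemma PWf_ext f g lo xs : (forall x, geo lo x -> f x = g x) -> PWf g lo xs -> PWf f lo xs.
Proof.
elim: xs lo => [|x1 xs IH] lo /= E.
  by move=> [al [be H]]; exists al, be => x gx; rewrite E // H.
move=> [lt [[al [be H]] P]]; split => //; split.
  by exists al, be => x gx le; rewrite E // H.
apply: IH P => x /= le; apply: E.
by case: lo lt {H} => //= l lt; apply: le_trans (ltW lt) le.
Qed.

Lemma PWf_restrict f g lo xs x1 : PWf g lo xs -> geo lo x1 ->
  (forall x, x1 <= x -> f x = g x) ->
  exists ys, PWf f (Some x1) ys /\ (size ys <= size xs)%N.
Proof.
elim: xs lo => [|x2 xs IH] lo /= P g1 E.
  move: P => [al [be H]]; exists [::]; split => //; exists al, be => x /= le.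
  rewrite E // H //; case: lo g1 {H} => //= l ?; exact: le_trans le.
move: P => [lt [[al [be H]] P]].
case: (ltP x1 x2) => [lt12|le21].
  exists (x2 :: xs); split => //; split => //; split.
    exists al, be => x /= le1 le2; rewrite E // H //.
    case: lo g1 {H lt} => //= l ?; exact: le_trans le1.
  apply: PWf_ext P => x /= le; apply: E; exact: le_trans (ltW lt12) le.
have [ys [P' S']] := IH _ P le21 E.
by exists ys; split => //; apply: leq_trans S' (leqnSn _).
Qed.

Lemma PWf_Some f lo xs : PWf f (Some lo) xs -> path <%R lo xs /\
  forall i, (i <= size xs)%N -> exists al be, forall x, nth lo (lo :: xs) i <= x ->
    ((i < size xs)%N -> x <= nth 0 xs i) -> f x = al * x + be.
Proof.
elim: xs lo => [|x1 xs IH] lo /=.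
  move=> [al [be H]]; split => // i; rewrite leqn0 => /eqP-> /=.
  by exists al, be => x le _; apply: H.
move=> [lt [[al [be H]] P]]; have [pth Hi] := IH _ P; rewrite lt pth; split => // [[|i]] /=.
  by move=> _; exists al, be => x le1 le2; apply: H => //; apply: le2.
rewrite ltnS => le; have [al' [be' H']] := Hi _ le.
exists al', be' => x le1 le2; apply: H' => //.
by rewrite (set_nth_default lo) //.
Qed.

Lemma PW_pieces f xs : PWf f None xs -> pieces_le f (size xs).+1.
Proof.
case: xs => [|x1 ys] /=.
  move=> [al [be H]]; exists [::]; split => //; split => // i; rewrite leqn0 => /eqP->.
  by exists al, be => x _ _; apply: H.
move=> [_ [[al [be H]] P]]; have [pth Hi] := PWf_Some P.
exists (x1 :: ys); split => //; split => // [[|i]] /=.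
  by move=> _; exists al, be => x _ le2; apply: H => //; apply: le2.
rewrite ltnS => le; have [al' [be' H']] := Hi _ le.
exists al', be' => x le1 le2; apply: H' => //.
by rewrite (set_nth_default 0) //=; apply: le1.
Qed.


Fixpoint mx (d : line) (S : seq line) : line :=
  match S with
  | [::] => d
  | l :: S' => let r := mx l S' in if d.1 < r.1 then r else d
  end.

Lemma mx_in d S : mx d S \in d :: S.
Proof.
elim: S d => [|l S IH] d /=; first by rewrite mem_seq1.
case: ifP => _; last by rewrite mem_head.
by rewrite in_cons (IH l) orbT.
Qed.

Lemma mx_max d S l : l \in d :: S -> l.1 <= (mx d S).1.
Proof.
elim: S d l => [|l' S IH] d l /=; first by rewrite mem_seq1 => /eqP->.
rewrite in_cons => /orP[/eqP->|Hl].
  by case: ifP => [/ltW //|].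
case: ifP => H; first exact: IH.
move/negbT: H; rewrite -leNgt => H; exact: le_trans (IH _ _ Hl) H.
Qed.

Definition IsMin (S : seq line) (f : R -> R) := forall x,
  (exists2 l, l \in S & f x = ev l x) /\ (forall l, l \in S -> f x <= ev l x).

Lemma min_PW S f : S != [::] -> IsMin S f ->
  exists xs, PWf f None xs /\ (size xs < size S)%N.
Proof.
have [N leN] := ubnP (size S); elim: N S f leN => // N IH S f leN.
case: S leN => [//|d S0] leN _ Hf.
set S := d :: S0.
set m := (mx d S0).1.
have mS : mx d S0 \in S := mx_in d S0.
have mmax l : l \in S -> l.1 <= m by exact: mx_max.
pose Sm := [seq l <- S | l.1 == m].
have mSm : mx d S0 \in Sm by rewrite mem_filter eqxx mS.
have [l0Sm l0min] := amS 0 mSm.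
set l0 := am (mx d S0) Sm 0 in l0Sm l0min.
have l0S : l0 \in S by move: l0Sm; rewrite mem_filter => /andP[].
have l0m : l0.1 = m by move: l0Sm; rewrite mem_filter => /andP[/eqP].
have l0b l : l \in S -> l.1 = m -> l0.2 <= l.2.
  move=> lS lm; have := l0min l; rewrite mem_filter lm eqxx lS /ev !mulr0 !add0r.
  by apply.
pose S' := [seq l <- S | l.1 < m].
have sS' : (size S' < size S)%N.
  rewrite size_filter -count_predT; apply: count_strict => //.
  by exists l0 => //=; rewrite l0m ltxx.
case E' : S' => [|d' S1].
  exists [::]; split => //; exists l0.1, l0.2 => x _.
  have [[l lS fe] fle] := Hf x.
  have lm : l.1 = m.
    apply/eqP; rewrite eq_le mmax //= leNgt; apply/negP => lt.
    have : l \in S' by rewrite mem_filter lt lS.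
    by rewrite E'.
  have := fle l0 l0S; have := l0b l lS lm; rewrite fe /ev lm -l0m => h1 h2; lra.
have S'S l : l \in S' -> l \in S /\ l.1 < m by rewrite mem_filter => /andP[].
pose f' x := ev (am d' S1 x) x.
have Hf' : IsMin S' f'.
  move=> x; rewrite E'; split; first by exists (am d' S1 x) => //; apply: am_in.
  by move=> l; apply: am_min.
have ne : S' != [::] by rewrite E'.
have [xs' [PW' sz']] := IH S' f' (leq_trans sS' leN) ne Hf'.
pose cross (l : line) := (l.2 - l0.2) / (m - l.1).
pose cl l : line := (0, cross l).
pose x1 := ev (am (cl d') (map cl S1) 0) 0.
have ev_cl l : ev (cl l) 0 = cross l by rewrite /ev mul0r add0r.
have x1le l : l \in S' -> x1 <= cross l.
  rewrite E' => lS; rewrite -ev_cl; apply: am_min.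
  by rewrite -map_cons; apply: map_f.
have [ls lsS x1E] : exists2 ls, ls \in S' & x1 = cross ls.
  have := am_in (cl d') (map cl S1) 0; rewrite -map_cons => /mapP [ls lsS e].
  by exists ls; rewrite ?E' // /x1 e ev_cl.
have cross_le l x : l.1 < m -> x <= cross l -> ev l0 x <= ev l x.
  move=> lt; rewrite /cross ler_pdivlMr ?subr_gt0 // /ev l0m => h; lra.
have cross_ge l x : l.1 < m -> cross l <= x -> ev l x <= ev l0 x.
  move=> lt; rewrite /cross ler_pdivrMr ?subr_gt0 // /ev l0m => h; lra.
have fi x : x <= x1 -> f x = ev l0 x.
  move=> le; have [[l lS fe] fle] := Hf x; apply/le_anti; rewrite fle //= fe.
  case: (ltP l.1 m) => hlt.
    have lS' : l \in S' by rewrite mem_filter hlt lS.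
    exact: (cross_le _ _ hlt (le_trans le (x1le _ lS'))).
  have lm : l.1 = m by apply/le_anti; apply/andP; split; [exact: mmax | exact: hlt].
  have := l0b l lS lm; rewrite /ev lm -l0m => h; lra.
have fii x : x1 <= x -> f x = f' x.
  move=> le; have [[l lS fe] fle] := Hf x; have [[l' l'S f'e] f'le] := Hf' x.
  apply/le_anti; rewrite f'e fle ?(S'S _ l'S).1 //= fe -f'e.
  have [lsS' lsm] := S'S _ lsS.
  have h1 : f' x <= ev ls x by apply: f'le.
  case: (ltP l.1 m) => lt.
    by apply: f'le; rewrite mem_filter lt lS.
  have lm : l.1 = m by apply/le_anti; apply/andP; split; [exact: mmax | exact: lt].
  have h2 := cross_ge ls x lsm ltac:(by rewrite -x1E).
  have := l0b l lS lm; rewrite /ev lm -l0m => h; move: h1 h2; rewrite /ev => *; lra.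
have [ys [PWy szy]] := PWf_restrict (lo := None) PW' (erefl true) fii.
exists (x1 :: ys); split.
  by split => //; split => //; exists l0.1, l0.2 => x _ le; apply: fi.
exact: leq_ltn_trans (leq_ltn_trans szy sz') sS'.
Qed.
End PW.



Lemma numeric (R : realType) (n t k : nat) : (2 <= n)%N -> (2 ^ t <= n)%N ->
  (k <= 2 * (8 * n) ^ t.+1)%N ->
  (k%:R : R) <= (n%:R : R) `^ (log2 (n%:R : R) + 8%:R).
Proof.
move=> n2 tn kle.
have n0 : (0 : R) < n%:R by rewrite ltr0n; lia.
apply: le_trans (_ : (2 * (8 * n) ^ t.+1)%N%:R <= _); first by rewrite ler_nat.
have X0 : (0 : R) < (2 * (8 * n) ^ t.+1)%N%:R.
  by rewrite ltr0n muln_gt0 expn_gt0 muln_gt0 /=; lia.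
rewrite -ler_ln ?posrE //; last exact: powR_gt0.
have two : (0 : R) < 2 by rewrite ltr0n.
have eight : (0 : R) < 8%:R by rewrite ltr0n.
rewrite ln_powR natrM natrX natrM.
rewrite lnM ?posrE //; last by rewrite exprn_gt0 // mulr_gt0.
rewrite lnXn ?mulr_gt0 // lnM ?posrE //.
have -> : (8%:R : R) = 2 ^+ 3 by rewrite -natrX.
rewrite lnXn //.
set c := ln (2 : R); set L := ln (n%:R : R).
have c0 : 0 < c by apply: ln_gt0; rewrite (_ : 1 = 1%:R) // ltr_nat.
have cL : c <= L by rewrite ler_ln ?posrE // ler_nat.
have tcL : c *+ t <= L.
  rewrite -lnXn // ler_ln ?posrE ?exprn_gt0 //.
  by rewrite -natrX ler_nat.
have -> : log2 (n%:R : R) = L / c by [].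
move: tcL; rewrite -[c *+ t]mulr_natr -[(_ + L) *+ _]mulr_natr -[c *+ 3]mulr_natr => tcL.
set T := (t%:R : R) in tcL *.
have T0 : 0 <= T by rewrite /T ler0n.
have -> : (t.+1%:R : R) = T + 1 by rewrite /T -natr1.
set q := L / c.
have hq : q * c = L by rewrite /q divfK // gt_eqF.
have hTL : T * L <= q * L by rewrite -hq; nra.
nra.
Qed.

Theorem theorem2 :
  exists C : nat, forall (R : realType) (n : nat) (E : rel 'I_n)
    (a b : 'I_n -> 'I_n -> R) (s t : 'I_n) (f : R -> R),
    acyclic E -> is_min_cost E a b s t f ->
    exists k : nat, pieces_le f k /\
      (k%:R <= (n%:R : R) `^ (log2 (n%:R : R) + C%:R)).
Proof.
exists 8%N => R n E a b s t f hac hmin.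
have n0 : (0 < n)%N := leq_ltn_trans (leq0n s) (ltn_ord s).
have psize p : path E s p -> (size p < n)%N.
  move=> pp; have := @dag_size n E hac s p pp. done.
case: (ltnP 1 n) => n2; last first.
  have n1 : n = 1%N by lia.
  have fid x : f x = x.
    have [[p [[pp lp] fe]] _] := hmin x.
    move: (psize p pp) fe; case: p {pp lp} => [_ -> //|w p' /=]; lia.
  exists 1%N; split.
    exists [::]; split => //; split => // i; rewrite leqn0 => /eqP ->.
    by exists 1, 0 => x _ _; rewrite fid mul1r addr0.
  by rewrite n1 powR1.
set tl := trunc_log 2 n.
have [Lo [Hi [sLo _ oLo _ pLo]]] := @Qall R n E a b tl.+1 s t.
have Hm : IsMin Lo f.
  move=> x; have [[p [[pp lp] fe]] fle] := hmin x.
  have sp : (size p <= 2 ^ tl.+1)%N.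
    apply: ltnW; apply: leq_trans (psize p pp) _; apply: ltnW; exact: trunc_log_ltn.
  have [[l lLo le] _] := pLo p pp lp sp x.
  have fl : forall l, l \in Lo -> f x <= ev l x.
    by move=> l' /oLo [p' [pp' lp' _ ce]]; rewrite ce; apply: fle; split.
  split => //; exists l => //; by apply/le_anti; rewrite fl // fe le.
have ne : Lo != [::].
  have [[p [[pp lp] _]] _] := hmin 0.
  have sp : (size p <= 2 ^ tl.+1)%N.
    apply: ltnW; apply: leq_trans (psize p pp) _; apply: ltnW; exact: trunc_log_ltn.
  have [[l lLo _] _] := pLo p pp lp sp 0.
  by apply/eqP => e; rewrite e in lLo.
have [xs [PW sz]] := min_PW ne Hm.
exists (size xs).+1; split; first exact: PW_pieces.
apply: numeric n2 (trunc_logP _ n0) _ => //.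
exact: leq_trans sz sLo.
Qed.
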